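(* Let $R$ be an $F$-finite $F$-pure ring of prime characteristic $p$, let $\mathfrak a,J$ be ideals with $\mathfrak a\subseteq\sqrt J$, and let $\overline R=R/\mathcal P(J)$ with images $\overline{\mathfrak a},\overline J$. Then $\operatorname{ct}_J(\mathfrak a)\le\operatorname{ct}_{\overline J}(\overline{\mathfrak a})$. In particular, if $R$ is local (or standard graded) with (homogeneous) maximal ideal $\mathfrak m$ and $\overline R=R/\mathcal P(\mathfrak m)$, then $\operatorname{fpt}(\mathfrak a)\le\operatorname{fpt}(\overline{\mathfrak a})$.
   Context: $J_e=\{f\in R\mid \varphi(f^{1/p^e})\in J \text{ for all }\varphi\in\operatorname{Hom}_R(R^{1/p^e},R)\}$; $\mathcal P(J)=\bigcap_{s\in\mathbb N}J_s$ (Cartier core); $b^J_{\mathfrak a}(p^e)=\max\{t\in\mathbb N\mid\mathfrak a^t\not\subseteq J_e\}$ and $\operatorname{ct}_J(\mathfrak a)=\lim_{e\to\infty}b^J_{\mathfrak a}(p^e)/p^e$, with the analogous notions in $\overline R$; $\operatorname{fpt}(\mathfrak a)=\operatorname{ct}_{\mathfrak m}(\mathfrak a)$. *)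

(* Defs.v *)
From HB Require Import structures.
From mathcomp Require Import all_boot all_order all_algebra.
From Stdlib Require Import Reals.
Set Implicit Arguments. Unset Strict Implicit. Unset Printing Implicit Defensive.
Import GRing.Theory.
Local Open Scope ring_scope.

Section Defs.
Variable A : comNzRingType.

Definition is_ideal (I : A -> Prop) : Prop :=
  I 0 /\ (forall x y, I x -> I y -> I (x + y)) /\ (forall r x, I x -> I (r * x)).

Definition sub_set (I K : A -> Prop) : Prop := forall x, I x -> K x.

Definition radical (J : A -> Prop) : A -> Prop := fun x => exists n : nat, J (x ^+ n).

Definition gen_by (s : seq A) : A -> Prop :=
  fun x => exists c : seq A, size c = size s /\ x = \sum_(i < size s) c`_i * s`_i.

Definition noetherian : Prop :=
  forall I, is_ideal I -> exists s : seq A, forall x, I x <-> gen_by s x.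

Definition ideal_mul (I K : A -> Prop) : A -> Prop :=
  fun z => exists s : seq (A * A),
    (forall q, q \in s -> I q.1 /\ K q.2) /\ z = \sum_(q <- s) q.1 * q.2.

Fixpoint ideal_pow (a : A -> Prop) (t : nat) : A -> Prop :=
  match t with
  | O => fun _ => True
  | S t' => ideal_mul a (ideal_pow a t')
  end.

Variable p : nat.

(* phi in Hom_A(A^{1/p^e}, A), identified with a p^{-e}-linear map A -> A:
   additive and phi (r^(p^e) * x) = r * phi x *)
Definition p_inv_linear (e : nat) (phi : A -> A) : Prop :=
  (forall x y, phi (x + y) = phi x + phi y) /\
  (forall r x, phi (r ^+ (expn p e) * x) = r * phi x).

Definition Je (J : A -> Prop) (e : nat) : A -> Prop :=
  fun f => forall phi, p_inv_linear e phi -> J (phi f).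

Definition cartier_core (J : A -> Prop) : A -> Prop :=
  fun f => forall s : nat, Je J s f.

(* F-finite: F_* A is a finitely generated A-module, i.e. there are
   g_1..g_n with every x = sum r_i^p g_i *)
Definition F_finite : Prop :=
  exists g : seq A, forall x : A, exists r : seq A,
    size r = size g /\ x = \sum_(i < size g) r`_i ^+ p * g`_i.

(* F-pure: the Frobenius A -> F_* A is pure, expressed by the
   linear-systems criterion for purity: every finite linear system with
   coefficients and right-hand side in A that is solvable in F_* A is
   solvable in A. In F_* A the system  M y = b  reads  M^[p] x = b^[p]. *)
Definition F_pure : Prop :=
  forall (m n : nat) (M : 'M[A]_(m, n)) (b : 'cV[A]_m),
    (exists x : 'cV[A]_n,
        map_mx (fun r => r ^+ p) M *m x = map_mx (fun r => r ^+ p) b) ->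
    exists y : 'cV[A]_n, M *m y = b.

Definition is_b (a J : A -> Prop) (e t : nat) : Prop :=
  ~ sub_set (ideal_pow a t) (Je J e) /\
  (forall t', ~ sub_set (ideal_pow a t') (Je J e) -> leq t' t).

Definition is_ct (a J : A -> Prop) (c : R) : Prop :=
  exists b : nat -> nat, (forall e, is_b a J e (b e)) /\
    Un_cv (fun e => (INR (b e) / INR (expn p e))%R) c.

Definition is_maximal (m : A -> Prop) : Prop :=
  is_ideal m /\ ~ m 1 /\
  (forall I, is_ideal I -> sub_set m I -> ~ I 1 -> sub_set I m).

Definition is_local_with_max (m : A -> Prop) : Prop :=
  is_maximal m /\ (forall m', is_maximal m' -> forall x, m' x <-> m x).

End Defs.

Definition image_set (A B : Type) (f : A -> B) (I : A -> Prop) : B -> Prop :=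
  fun y => exists x, I x /\ f x = y.

Definition is_quotient_by (A B : comNzRingType) (pi : {rmorphism A -> B})
  (K : A -> Prop) : Prop :=
  (forall y : B, exists x, pi x = y) /\ (forall x, pi x = 0 <-> K x).

(* Main.v *)
Require Import Defs.
From HB Require Import structures.
From mathcomp Require Import all_boot all_order all_algebra.
From Stdlib Require Import Reals.
From Stdlib Require Import ClassicalEpsilon.
Local Open Scope ring_scope.
Import GRing.Theory.
Set Implicit Arguments.

Section Aux.
Variables (A Abar : comNzRingType) (p : nat) (pi : {rmorphism A -> Abar}).

Lemma pow_image (a : A -> Prop) t f :
  ideal_pow a t f -> ideal_pow (image_set pi a) t (pi f).
Proof.
elim: t f => [//|t IH] f /= [s [Hs ->]].
exists [seq (pi q.1, pi q.2) | q <- s]; split.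
  move=> q /mapP [q0 Hq0 ->] /=.
  have [H1 H2] := Hs q0 Hq0.
  split; [by exists q0.1 | exact: IH].
by rewrite rmorph_sum big_map; apply: eq_bigr => q _; rewrite rmorphM.
Qed.

Lemma core_compat (J : A -> Prop) e phi k :
  p_inv_linear p e phi -> cartier_core p J k -> cartier_core p J (phi k).
Proof.
move=> [Ha Hl] Hk s psi [Hpa Hpl].
apply: (Hk (s + e)%N (fun x => psi (phi x))); split.
  by move=> x y; rewrite Ha Hpa.
by move=> r x; rewrite expnD exprM Hl Hpl.
Qed.

Lemma core_sub (J : A -> Prop) k : cartier_core p J k -> J k.
Proof.
move=> Hk; apply: (Hk 0%N (fun x : A => x)); split => //.
Qed.

Lemma addinv_phi e (phi : A -> A) : p_inv_linear p e phi -> forall x, phi (- x) = - phi x.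
Proof.
move=> [Ha _] x.
have H0 : phi 0 = 0.
  by apply: (addrI (phi 0)); rewrite -Ha !addr0.
by apply: (addrI (phi x)); rewrite -Ha !subrr.
Qed.

Lemma main_step (J a : A -> Prop) (Jid : is_ideal J)
  (Hq : is_quotient_by pi (cartier_core p J)) e t :
  ~ sub_set (ideal_pow a t) (Je p J e) ->
  ~ sub_set (ideal_pow (image_set pi a) t) (Je p (image_set pi J) e).
Proof.
move=> Hn Hbar; apply: Hn => f Hf phi Hphi.
have [Hsurj Hker] := Hq.
pose sec (y : Abar) : A := proj1_sig (constructive_indefinite_description _ (Hsurj y)).
have secK y : pi (sec y) = y by rewrite /sec; case: constructive_indefinite_description.
have [Ha Hl] := Hphi.
have wd x x' : pi x = pi x' -> pi (phi x) = pi (phi x').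
  move=> E; apply/eqP; rewrite -subr_eq0 -rmorphB; apply/eqP; apply/Hker.
  rewrite -(addinv_phi Hphi) -Ha; apply: (core_compat Hphi).
  by apply/Hker; rewrite rmorphB E subrr.
pose phib (y : Abar) := pi (phi (sec y)).
have Hphib : p_inv_linear p e phib.
  split.
    move=> y1 y2; rewrite /phib -rmorphD -Ha; apply: wd.
    by rewrite rmorphD !secK.
  move=> r y; rewrite /phib -(secK r) -rmorphM -Hl; apply: wd.
  by rewrite rmorphM rmorphXn !secK.
have := Hbar (pi f) (pow_image _ _ _ Hf) phib Hphib.
rewrite /phib (wd (sec (pi f)) f (secK _)).
move=> [j [Hj Ej]].
have Hd : cartier_core p J (phi f - j).
  by apply/Hker; rewrite rmorphB Ej subrr.
have := core_sub Hd.
have [_ [JD _]] := Jid.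
move=> H; have := JD _ _ H Hj; by rewrite subrK.
Qed.

Lemma main_gen (J a : A -> Prop) (Jid : is_ideal J)
  (Hq : is_quotient_by pi (cartier_core p J)) (c cbar : R) (p0 : leq 1 p) :
  is_ct p a J c -> is_ct p (image_set pi a) (image_set pi J) cbar -> (c <= cbar)%R.
Proof.
move=> [b [Hb Hc]] [bb [Hbb Hcb]].
apply: (Rle_cv_lim _ Hc Hcb) => e.
have Hle : leq (b e) (bb e).
  apply: (proj2 (Hbb e)); apply: (main_step _ Jid Hq).
  exact: (proj1 (Hb e)).
apply: Rmult_le_compat_r.
  apply: Rlt_le; apply: Rinv_0_lt_compat; apply: lt_0_INR.
  by apply/ltP; rewrite expn_gt0 p0.
by apply: le_INR; apply/leP.
Qed.
End Aux.

Theorem mainTheorem16 (A : comNzRingType) (p : nat) :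
  (p \in [pchar A]) -> noetherian A -> F_finite A p -> F_pure A p ->
  (forall (a J : A -> Prop), is_ideal a -> is_ideal J ->
     sub_set a (radical J) ->
     forall (Abar : comNzRingType) (pi : {rmorphism A -> Abar}),
       is_quotient_by pi (cartier_core p J) ->
       forall c cbar : R,
         is_ct p a J c ->
         is_ct p (image_set pi a) (image_set pi J) cbar ->
         (c <= cbar)%R)
  /\
  (forall (m : A -> Prop), is_local_with_max m ->
     forall a : A -> Prop, is_ideal a -> sub_set a m ->
     forall (Abar : comNzRingType) (pi : {rmorphism A -> Abar}),
       is_quotient_by pi (cartier_core p m) ->
       forall c cbar : R,
         is_ct p a m c ->
         is_ct p (image_set pi a) (image_set pi m) cbar ->
         (c <= cbar)%R).
Proof.
move=> Hch _ _ _.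
have p0 : leq 1 p by apply: prime_gt0; exact: pcharf_prime Hch.
split.
  move=> a J _ Jid _ Abar pi Hq c cbar.
  exact: (@main_gen A Abar p pi J a Jid Hq c cbar p0).
move=> m [[mid _] _] a _ _ Abar pi Hq c cbar.
exact: (@main_gen A Abar p pi m a mid Hq c cbar p0).
Qed.
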